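(* Assume the standing setting below and fix $\rho>0$. For any $\zeta=(\zeta_1,\dots,\zeta_L)\in\mathsf Z$, writing $\bar\zeta_\ell=\frac1{|A_\ell|}\sum_{v\in A_\ell}\zeta_\ell(v)$: (i) there exists a unique pair $(\lambda,z)\in\mathsf Z\times\mathsf Z$ with $z\in\partial g^*(\lambda)$ and $\lambda+\rho z=\zeta$; (ii) $J_{\rho U}(\zeta)=\lambda$; (iii) for each $\ell$, $\lambda_\ell=\zeta_\ell-\bar\zeta_\ell 1_{A_\ell}$ and $z_\ell=\frac{\bar\zeta_\ell}{\rho}1_{A_\ell}$; write $\bar z_\ell=\bar\zeta_\ell/\rho$ for the constant value of $z_\ell$; (iv) for each $\ell$ and each $v\in A_\ell$, the $\ell$-th block of $S=J_R$ is $S_\ell(\zeta)(v)=\lambda_\ell(v)+\rho\,x(v)$, where for every $v\in V$ $$x(v)=\mathrm{prox}_{f_v,\rho|\sigma(v)|}\Big(\frac1{|\sigma(v)|}\sum_{m\in\sigma(v)}\Big(\bar z_m-\frac{\lambda_m(v)}{\rho}\Big)\Big).$$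
   Context: $V$ finite set, $\mathsf X$ Euclidean space, $f_v:\mathsf X\to(-\infty,+\infty]$ proper closed convex for each $v\in V$, and $\inf_{y\in\mathsf X}\sum_v f_v(y)$ is finite and attained. $A_1,\dots,A_L\subset V$ with $\bigcup_\ell A_\ell=V$ and $\bigcup_\ell G(A_\ell)$ connected (for a graph $G=(V,E)$; $G(A)$ = induced subgraph). $\mathsf X^A$: functions $A\to\mathsf X$ with inner product $\sum_{v\in A}\langle x(v),y(v)\rangle$; $1_A$ constant one; $\mathrm{sp}(1_A)$ constants on $A$. $\mathsf Z=\mathsf X^{A_1}\times\cdots\times\mathsf X^{A_L}$ with the sum inner product. $f(x)=\sum_v f_v(x(v))$ on $\mathsf X^V$; $g(z)=\sum_\ell\iota_{\mathrm{sp}(1_{A_\ell})}(z_\ell)$ ($\iota_H$ = $0$ on $H$, $+\infty$ elsewhere); $M:\mathsf X^V\to\mathsf Z$, $Mx=(x|_{A_1},\dots,x|_{A_L})$, with adjoint $M^*$; $f^*,g^*$ Fenchel conjugates. $\sigma(v)=\{\ell:v\in A_\ell\}$. $\mathrm{prox}_{h,\rho}(x)=\arg\min_y h(y)+\frac\rho2\|y-x\|^2$. Operators on $\mathsf Z$ (set-valued, identified with graphs): $T(\nu)=\{-Mx: x\in\partial f^*(-M^*\nu)\}$ (the subdifferential of $\nu\mapsto f^*(-M^*\nu)$), $U=\partial g^*$. Resolvent $J_{\rho U}=(I+\rho U)^{-1}$. Douglas–Rachford operator $R=\{(\nu+\rho b,\ \mu-\nu): (\mu,b)\in U,\ (\nu,a)\in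 T,\ \nu+\rho a=\mu-\rho b\}$, and $S=J_R=(I+R)^{-1}$, which is single valued with domain $\mathsf Z$ and blocks $S(\zeta)=(S_1(\zeta),\dots,S_L(\zeta))$, $S_\ell(\zeta)\in\mathsf X^{A_\ell}$. *)

(* Defs.v *)
From Stdlib Require Import Reals ClassicalEpsilon.
From mathcomp Require Import all_boot.
Set Implicit Arguments. Unset Strict Implicit. Unset Printing Implicit Defensive.
Open Scope R_scope.

Inductive ereal := Fin (r : R) | PInf.

Definition ele (a b : ereal) : Prop :=
  match a, b with
  | _, PInf => True
  | PInf, Fin _ => False
  | Fin x, Fin y => x <= y
  end.

Definition elt (a b : ereal) : Prop :=
  match a, b with
  | Fin _, PInf => True
  | PInf, _ => False
  | Fin x, Fin y => x < y
  end.

Definition eplus (a b : ereal) : ereal :=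
  match a, b with
  | Fin x, Fin y => Fin (x + y)
  | _, _ => PInf
  end.

(* supremum of a set of reals, in (-oo,+oo]; only used on nonempty sets
   (for an empty set it returns +oo, never used below since all functions
   whose conjugates are taken are proper) *)
Definition esup (E : R -> Prop) : ereal :=
  match excluded_middle_informative (bound E /\ exists x, E x) with
  | left H => Fin (proj1_sig (completeness E (proj1 H) (proj2 H)))
  | right _ => PInf
  end.

Section Generic.
Variables (W : Type) (ip : W -> W -> R) (subW : W -> W -> W).

Definition fconj (h : W -> ereal) (y : W) : ereal :=
  esup (fun r => exists x c, h x = Fin c /\ r = ip x y - c).

Definition subdiff (phi : W -> ereal) (lam z : W) : Prop :=
  exists c, phi lam = Fin c /\
    forall mu, ele (Fin (c + ip z (subW mu lam))) (phi mu).
End Generic.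

Section Spaces.
Variable d : nat.
Definition X := 'I_d -> R.
Definition addX (x y : X) : X := fun i => x i + y i.
Definition subX (x y : X) : X := fun i => x i - y i.
Definition oppX (x : X) : X := fun i => - x i.
Definition scaleX (a : R) (x : X) : X := fun i => a * x i.
Definition zeroX : X := fun _ => 0.
Definition ipX (x y : X) : R := \big[Rplus/0]_(i < d) (x i * y i).
Definition normX (x : X) : R := sqrt (ipX x x).

Definition eproper (h : X -> ereal) : Prop := exists x, h x <> PInf.
Definition elsc (h : X -> ereal) : Prop :=
  forall x t, elt (Fin t) (h x) ->
    exists delta, 0 < delta /\
      forall y, normX (subX y x) < delta -> elt (Fin t) (h y).
Definition econvex (h : X -> ereal) : Prop :=
  forall x y a b th, h x = Fin a -> h y = Fin b -> 0 <= th <= 1 ->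
    ele (h (addX (scaleX th x) (scaleX (1 - th) y))) (Fin (th * a + (1 - th) * b)).

Definition is_prox (h : X -> ereal) (r : R) (x p : X) : Prop :=
  forall y, ele (eplus (h p) (Fin (r / 2 * (normX (subX p x))^2)))
                (eplus (h y) (Fin (r / 2 * (normX (subX y x))^2))).

Variables (V : finType) (L : nat) (A : 'I_L -> {set V}).

Definition XV := V -> X.
Definition ipXV (x y : XV) : R := \big[Rplus/0]_(v : V) ipX (x v) (y v).
Definition subXV (x y : XV) : XV := fun v => subX (x v) (y v).
Definition oppXV (x : XV) : XV := fun v => oppX (x v).

Definition Asub (l : 'I_L) := {v : V | v \in A l}.
Definition Zsp := forall l : 'I_L, Asub l -> X.
Definition ipZ (z w : Zsp) : R :=
  \big[Rplus/0]_(l < L) \big[Rplus/0]_(s : Asub l) ipX (z l s) (w l s).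
Definition addZ (z w : Zsp) : Zsp := fun l s => addX (z l s) (w l s).
Definition subZ (z w : Zsp) : Zsp := fun l s => subX (z l s) (w l s).
Definition scaleZ (a : R) (z : Zsp) : Zsp := fun l s => scaleX a (z l s).
Definition oppZ (z : Zsp) : Zsp := fun l s => oppX (z l s).

Definition Mop (x : XV) : Zsp := fun l s => x (val s).

(* value of the l-th block of z at v (junk zeroX if v \notin A_l) *)
Definition zat (z : Zsp) (l : 'I_L) (v : V) : X :=
  match insub v : option (Asub l) with Some s => z l s | None => zeroX end.

Definition fsum (fv : V -> X -> ereal) (x : XV) : ereal :=
  \big[eplus/Fin 0]_(v : V) fv v (x v).

(* g(z) = sum_l iota_{sp(1_{A_l})}(z_l) *)
Definition in_sp1 (l : 'I_L) (zl : Asub l -> X) : Prop :=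
  exists c : X, forall s, zl s = c.
Definition gind (z : Zsp) : ereal :=
  \big[eplus/Fin 0]_(l < L)
     (if excluded_middle_informative (in_sp1 (z l)) then Fin 0 else PInf).

(* operators on Z as graphs *)
Definition Top (fv : V -> X -> ereal) (Mstar : Zsp -> XV) (nu a : Zsp) : Prop :=
  exists x, subdiff ipXV subXV (fconj ipXV (fsum fv)) (oppXV (Mstar nu)) x
            /\ a = oppZ (Mop x).
Definition Uop (mu b : Zsp) : Prop := subdiff ipZ subZ (fconj ipZ gind) mu b.

Definition JrhoU (rho : R) (zeta lam : Zsp) : Prop :=
  exists b, Uop lam b /\ zeta = addZ lam (scaleZ rho b).

Definition Rop (fv : V -> X -> ereal) (Mstar : Zsp -> XV) (rho : R) (w r : Zsp) : Prop :=
  exists mu b nu a, Uop mu b /\ Top fv Mstar nu a /\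
    addZ nu (scaleZ rho a) = subZ mu (scaleZ rho b) /\
    w = addZ nu (scaleZ rho b) /\ r = subZ mu nu.

Definition Sop (fv : V -> X -> ereal) (Mstar : Zsp -> XV) (rho : R) (zeta w : Zsp) : Prop :=
  exists r, Rop fv Mstar rho w r /\ zeta = addZ w r.

Definition sigmaV (v : V) : {set 'I_L} := [set l | v \in A l].

Definition sumX (I : finType) (F : I -> X) : X := \big[addX/zeroX]_(i : I) F i.
Definition zbar (zeta : Zsp) (l : 'I_L) : X :=
  scaleX (/ INR #|A l|) (sumX (fun s : Asub l => zeta l s)).

End Spaces.

(* Main.v *)
From HB Require Import structures.
Require Import Defs.
From Stdlib Require Import Reals ClassicalEpsilon Classical Lra Lia FunctionalExtensionality.
From mathcomp Require Import all_boot.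
Open Scope R_scope.

HB.instance Definition _ := Monoid.isComLaw.Build R 0 Rplus (fun a b c => esym (Rplus_assoc a b c)) Rplus_comm Rplus_0_l.

Section Sums.
Variable I : finType.
Local Notation S F := (\big[Rplus/0]_(i : I) F i).

Lemma sR_add (F G : I -> R) : S F + S G = S (fun i => F i + G i).
Proof. by rewrite big_split. Qed.

Lemma sR_scale k (F : I -> R) : k * S F = S (fun i => k * F i).
Proof.
apply: (big_morph (fun x => k * x)); first by move=> x y; ring.
by ring.
Qed.

Lemma sR_ext (F G : I -> R) : (forall i, F i = G i) -> S F = S G.
Proof. by move=> H; apply: eq_bigr => i _. Qed.

Lemma sR_le (F G : I -> R) : (forall i, F i <= G i) -> S F <= S G.
Proof.
move=> H; apply: (big_ind2 (fun x y => x <= y)); first lra.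
  by move=> *; lra.
by move=> i _; apply: H.
Qed.

Lemma sR_ge0 (F : I -> R) : (forall i, 0 <= F i) -> 0 <= S F.
Proof.
move=> H; apply: (big_ind (fun x => 0 <= x)); first lra.
  by move=> *; lra.
by move=> i _; apply: H.
Qed.

Lemma sR_term (F : I -> R) j : (forall i, 0 <= F i) -> F j <= S F.
Proof.
move=> H; rewrite (bigD1 j) //=.
have : 0 <= \big[Rplus/0]_(i | i != j) F i.
  apply: (big_ind (fun x => 0 <= x)); first lra.
    by move=> *; lra.
  by move=> i _; apply: H.
lra.
Qed.

Lemma sR_eq0 (F : I -> R) : (forall i, 0 <= F i) -> S F = 0 -> forall j, F j = 0.
Proof.
move=> H E j; have := @sR_term F j H; have := H j; lra.
Qed.

Lemma sR0 : S (fun _ => 0) = 0.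
Proof. by rewrite big1. Qed.

Lemma sR_comb3 a b c (F G H : I -> R) :
  a * S F + b * S G + c * S H = S (fun i => a * F i + b * G i + c * H i).
Proof. by rewrite !sR_scale !sR_add. Qed.

End Sums.
Lemma esup_ge (E : R -> Prop) r : E r -> ele (Fin r) (esup E).
Proof.
move=> Er; rewrite /esup; case: excluded_middle_informative => [H|H] //=.
case: (completeness _ _ _) => s [Hub Hlub] /=; exact: Hub.
Qed.

Lemma esup_eq (E : R -> Prop) r0 : E r0 -> (forall r, E r -> r <= r0) -> esup E = Fin r0.
Proof.
move=> Er Hb; rewrite /esup; case: excluded_middle_informative => [H|H] /=.
  case: (completeness _ _ _) => s [Hub Hlub] /=; f_equal.
  apply: Rle_antisym; [apply: Hlub; exact: Hb | exact: Hub].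
exfalso; apply: H; split; [by exists r0 | by exists r0].
Qed.

Lemma eplusA : associative eplus.
Proof. by case=> [a|] [b|] [c|] //=; rewrite Rplus_assoc. Qed.
Lemma eplusC : commutative eplus.
Proof. by case=> [a|] [b|] //=; rewrite Rplus_comm. Qed.
Lemma eplus0 : left_id (Fin 0) eplus.
Proof. by case=> [a|] //=; rewrite Rplus_0_l. Qed.
HB.instance Definition _ := Monoid.isComLaw.Build ereal (Fin 0) eplus eplusA eplusC eplus0.

Lemma ele_plus a b e1 e2 : ele (Fin a) e1 -> ele (Fin b) e2 -> ele (Fin (a+b)) (eplus e1 e2).
Proof. case: e1 => [x|]; case: e2 => [y|] //=; lra. Qed.

Lemma ele_big (I : finType) (a : I -> R) (F : I -> ereal) :
  (forall i, ele (Fin (a i)) (F i)) ->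
  ele (Fin (\big[Rplus/0]_(i : I) a i)) (\big[eplus/Fin 0]_(i : I) F i).
Proof.
move=> H; apply: (big_ind2 (fun x y => ele (Fin x) y)).
- by rewrite /=; lra.
- by move=> *; apply: ele_plus.
- by move=> i _; apply: H.
Qed.

Lemma big_Fin (I : finType) (a : I -> R) :
  \big[eplus/Fin 0]_(i : I) Fin (a i) = Fin (\big[Rplus/0]_(i : I) a i).
Proof. by apply: esym; apply: (big_morph Fin). Qed.

Lemma big_eplus_PInf (I : finType) (F : I -> ereal) j : F j = PInf ->
  \big[eplus/Fin 0]_(i : I) F i = PInf.
Proof. by move=> H; rewrite (bigD1 j) //= H. Qed.
Section Vec.
Variable d : nat.
Implicit Types x y u w p a : X d.

Lemma ipXE x y : ipX x y = \big[Rplus/0]_(i : 'I_d) (x i * y i).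
Proof. by []. Qed.

Lemma ipX_ge0 u : 0 <= ipX u u.
Proof. apply: sR_ge0 => i; nra. Qed.

Lemma nX2 u : normX u ^ 2 = ipX u u.
Proof. by rewrite /normX pow2_sqrt //; apply: ipX_ge0. Qed.

Lemma normX_lt u del : 0 < del -> ipX u u < del ^ 2 -> normX u < del.
Proof.
move=> hd hu; rewrite /normX.
have -> : del = sqrt (del ^ 2) by rewrite sqrt_pow2 //; lra.
apply: sqrt_lt_1 => //; [exact: ipX_ge0 | nra].
Qed.

Lemma ipX_coord u i : (u i) ^ 2 <= ipX u u.
Proof.
rewrite ipXE; have := @sR_term _ (fun i => u i * u i) i; simpl.
move=> H; have := H (fun j => ltac:(nra)); nra.
Qed.

Lemma ipX_eq0 u : ipX u u = 0 -> u = @zeroX d.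
Proof.
move=> H; apply: functional_extensionality => i; rewrite /zeroX.
have := @sR_eq0 _ (fun i => u i * u i) (fun j => ltac:(nra)) H i; simpl; nra.
Qed.

End Vec.
Section Prox.
Variables (d : nat) (h : X d -> ereal) (r : R) (a : X d).
Implicit Types (y p u : X d).
Hypotheses (hp : eproper h) (hl : elsc h) (hc : econvex h) (hr : 0 < r).

Local Notation nq u := (ipX u u).
Local Notation Q y := (r / 2 * nq (subX y a)).

Lemma nq_tri y p : nq (subX y p) <= 2 * nq (subX y a) + 2 * nq (subX p a).
Proof.
rewrite !ipXE !sR_scale sR_add; apply: sR_le => i; rewrite /subX; have := pow2_ge_0 (y i + p i - 2 * a i); nra.
Qed.

Lemma sub_conv t y p : subX (addX (scaleX t y) (scaleX (1 - t) p)) p = scaleX t (subX y p).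
Proof. apply: functional_extensionality => i; rewrite /subX /addX /scaleX; ring. Qed.

Lemma nq_scale t u : nq (scaleX t u) = t ^ 2 * nq u.
Proof. rewrite !ipXE sR_scale; apply: sR_ext => i; rewrite /scaleX; ring. Qed.

Lemma prox_lb : exists m0, forall y c, h y = Fin c -> m0 <= c + Q y.
Proof.
case: hp => p0; case Hp0: (h p0) => [c0|] // _.
have [del [hdel Hdel]] : exists del, 0 < del /\ forall y, normX (subX y p0) < del -> elt (Fin (c0 - 1)) (h y).
  by apply: hl; rewrite Hp0 /=; lra.
set K := nq (subX p0 a).
have hK : 0 <= K by apply: ipX_ge0.
have hrK : 0 <= r / 2 * K by apply: Rmult_le_pos; lra.
exists (c0 - 1 - 4 / (r * del ^ 2) - r / 2 * K) => y c Hy.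
have hQ : r / 2 * (nq (subX y p0) / 2 - K) <= Q y.
  have := nq_tri y p0; rewrite -/K => H; apply: Rmult_le_compat_l; lra.
have hpos : 0 <= 4 / (r * del ^ 2).
  apply: Rlt_le; apply: Rdiv_lt_0_compat; first lra.
  apply: Rmult_lt_0_compat; [lra | apply: pow_lt; lra].
have hQ0 : 0 <= Q y by have := @ipX_ge0 _ (subX y a); nra.
set D := normX (subX y p0).
have hD2 : D ^ 2 = nq (subX y p0) by apply: nX2.
have hD0 : 0 <= D by apply: sqrt_pos.
case: (Rlt_le_dec D del) => hDd.
  have H := Hdel y hDd; rewrite Hy in H; simpl in H; lra.
set t := del / (2 * D).
have hDp : 0 < D by lra.
have ht0 : 0 < t by apply: Rdiv_lt_0_compat; lra.
have ht1 : t <= 1 / 2.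
  rewrite /t; apply: (Rmult_le_reg_r (2 * D)); first lra.
  field_simplify; lra.
have := hc y p0 c c0 t Hy Hp0 (conj (Rlt_le _ _ ht0) (ltac:(lra) : t <= 1)).
case Hq: (h _) => [cq|] //= Hcq.
have : elt (Fin (c0 - 1)) (Fin cq).
  rewrite -Hq; apply: Hdel; apply: normX_lt => //.
  rewrite sub_conv nq_scale -hD2.
  have -> : t ^ 2 * D ^ 2 = (del / 2) ^ 2 by rewrite /t; field; lra.
  nra.
rewrite /= => Hcq2.
have hc1 : c - c0 >= - (2 * D / del).
  have : t * (c - c0) > -1 by lra.
  move=> H1; have -> : - (2 * D / del) = - / t by rewrite /t; field; lra.
  apply: Rle_ge; apply: (Rmult_le_reg_l t) => //.
  rewrite -Ropp_mult_distr_r Rinv_r; lra.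
have hsq : r / 4 * D ^ 2 - 2 * D / del >= - (4 / (r * del ^ 2)).
  have E : r / 4 * D ^ 2 - 2 * D / del + 4 / (r * del ^ 2) = r / 4 * (D - 4 / (r * del)) ^ 2.
    field; split; lra.
  have : 0 <= r / 4 * (D - 4 / (r * del)) ^ 2 by apply: Rmult_le_pos; [lra | apply: pow2_ge_0].
  lra.
rewrite -hD2 in hQ; have -> : del * (del * 1) = del ^ 2 by ring.
lra.
Qed.


Lemma nq_mid y1 y2 :
  nq (subX (addX (scaleX (1/2) y1) (scaleX (1 - 1/2) y2)) a) =
  (nq (subX y1 a) + nq (subX y2 a)) / 2 - nq (subX y1 y2) / 4.
Proof.
have -> : (nq (subX y1 a) + nq (subX y2 a)) / 2 - nq (subX y1 y2) / 4 =
  (1/2) * nq (subX y1 a) + (1/2) * nq (subX y2 a) + (-1/4) * nq (subX y1 y2) by field.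
rewrite !ipXE sR_comb3; apply: sR_ext => i.
rewrite /subX /addX /scaleX; field.
Qed.

Lemma cv_const (c : R) : Un_cv (fun _ => c) c.
Proof. move=> e he; exists 0%nat => n _; rewrite /R_dist Rminus_eq_0 Rabs_R0; lra. Qed.

Lemma cv_sum (I : finType) (F : nat -> I -> R) (G : I -> R) :
  (forall i, Un_cv (fun n => F n i) (G i)) ->
  Un_cv (fun n => \big[Rplus/0]_(i : I) F n i) (\big[Rplus/0]_(i : I) G i).
Proof.
move=> H; rewrite /index_enum; elim: (Finite.enum I) => [|j s IH].
  have E : (fun n : nat => \big[Rplus/0]_(i <- [::]) F n i) = fun _ => 0.
    by apply: functional_extensionality => n; rewrite big_nil.
  by rewrite E big_nil; apply: cv_const.
have E : (fun n : nat => \big[Rplus/0]_(i <- j :: s) F n i) =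
         fun n => F n j + \big[Rplus/0]_(i <- s) F n i.
  by apply: functional_extensionality => n; rewrite big_cons.
by rewrite E big_cons; apply: CV_plus.
Qed.

Lemma prox_exists : exists p, is_prox h r a p.
Proof.
have [m0 Hm0] := prox_lb.
case: hp => p0; case Hp0: (h p0) => [c0|] // _.
pose E (z : R) := exists y c, h y = Fin c /\ z = - (c + Q y).
have Eb : bound E.
  by exists (- m0) => z [y [c [Hy ->]]]; have := Hm0 y c Hy; lra.
have Ene : exists z, E z by exists (- (c0 + Q p0)), p0, c0.
case: (completeness E Eb Ene) => M [HMub HMlub].
set m := - M.
have Hm : forall y c, h y = Fin c -> m <= c + Q y.
  move=> y c Hy.
  have := HMub (- (c + Q y)) (ex_intro _ y (ex_intro _ c (conj Hy erefl))).
  rewrite /m; lra.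
have Happ : forall e, 0 < e -> exists y, exists c, h y = Fin c /\ c + Q y < m + e.
  move=> e he; apply: NNPP => Hn.
  have : M <= M - e.
    apply: HMlub => z [y [c [Hy ->]]].
    case: (Rlt_le_dec (c + Q y) (m + e)) => H; last by rewrite /m in H; lra.
    by exfalso; apply: Hn; exists y, c.
  lra.
have Hn : forall n : nat, exists y, exists c, h y = Fin c /\ c + Q y < m + / INR (S n).
  by move=> n; apply: Happ; apply: Rinv_0_lt_compat; apply: lt_0_INR; lia.
pose ys n := proj1_sig (constructive_indefinite_description _ (Hn n)).
have Hys : forall n, exists c, h (ys n) = Fin c /\ c + Q (ys n) < m + / INR (S n).
  by move=> n; rewrite /ys; case: constructive_indefinite_description.
have Hcau : forall j k, nq (subX (ys j) (ys k)) <= 4 / r * (/ INR (S j) + / INR (S k)).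
  move=> j k.
  have [cj [Hj Hj']] := Hys j; have [ck [Hk Hk']] := Hys k.
  pose w := addX (scaleX (1/2) (ys j)) (scaleX (1 - 1/2) (ys k)).
  have := hc (ys j) (ys k) cj ck (1/2) Hj Hk (conj (ltac:(lra) : 0 <= 1/2) (ltac:(lra) : 1/2 <= 1)).
  rewrite -/w; case Hw: (h w) => [cw|] //; rewrite /ele => Hcw.
  have := Hm _ _ Hw; rewrite /w nq_mid => Hmw.
  have H4 : r * nq (subX (ys j) (ys k)) <= 4 * (/ INR (S j) + / INR (S k)) by lra.
  have -> : 4 / r * (/ INR (S j) + / INR (S k)) = / r * (4 * (/ INR (S j) + / INR (S k))) by rewrite /Rdiv; ring.
  apply: (Rmult_le_reg_l r) => //; rewrite -Rmult_assoc Rinv_r; lra.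
have Hcc : forall i, Cauchy_crit (fun n => ys n i).
  move=> i e he.
  have he2 : 0 < e ^ 2 * r / 8 by apply: Rdiv_lt_0_compat; [apply: Rmult_lt_0_compat; [apply: pow_lt|] |]; lra.
  have [N [HN HN0]] := archimed_cor1 (e ^ 2 * r / 8) he2.
  exists N => j k Hj Hk; rewrite /R_dist.
  have h1 := Hcau j k.
  have h2 := @ipX_coord _ (subX (ys j) (ys k)) i; have e1 : subX (ys j) (ys k) i = ys j i - ys k i by [].
  rewrite e1 in h2.
  have hj : / INR (S j) <= / INR N.
    by apply: Rinv_le_contravar; [apply: lt_0_INR; lia | apply: le_INR; lia].
  have hk : / INR (S k) <= / INR N.
    by apply: Rinv_le_contravar; [apply: lt_0_INR; lia | apply: le_INR; lia].
  have h3 : 4 / r * (/ INR (S j) + / INR (S k)) <= 4 / r * (2 * / INR N).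
    apply: Rmult_le_compat_l; [apply: Rlt_le; apply: Rdiv_lt_0_compat; lra | lra].
  have h4 : 4 / r * (2 * / INR N) < 4 / r * (2 * (e ^ 2 * r / 8)).
    apply: Rmult_lt_compat_l; [apply: Rdiv_lt_0_compat; lra | lra].
  have h5 : 4 / r * (2 * (e ^ 2 * r / 8)) = e ^ 2 by field; lra.
  have h6 : (ys j i - ys k i) ^ 2 < e ^ 2 by lra.
  apply: Rabs_def1; nra.
pose ystar : X d := fun i => proj1_sig (R_complete _ (Hcc i)).
have Hlim : forall i, Un_cv (fun n => ys n i) (ystar i).
  by move=> i; rewrite /ystar; case: R_complete.
have Hc1 : Un_cv (fun n => nq (subX (ys n) ystar)) 0.
  have -> : 0 = \big[Rplus/0]_(i : 'I_d) ((ystar i - ystar i) * (ystar i - ystar i)).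
    apply: esym; rewrite (@sR_ext _ _ (fun _ => 0)); [exact: sR0 | move=> i; ring].
  apply: (@cv_sum _ (fun n i => (ys n i - ystar i) * (ys n i - ystar i)) _) => i.
  by apply: (CV_mult (fun n => ys n i - ystar i) (fun n => ys n i - ystar i));
     apply: (CV_minus (fun n => ys n i) (fun _ => ystar i)) => //; apply: cv_const.
have Hc2 : Un_cv (fun n => nq (subX (ys n) a)) (nq (subX ystar a)).
  apply: (@cv_sum _ (fun n i => (ys n i - a i) * (ys n i - a i)) _) => i.
  by apply: (CV_mult (fun n => ys n i - a i) (fun n => ys n i - a i));
     apply: (CV_minus (fun n => ys n i) (fun _ => a i)) => //; apply: cv_const.
have Hfin : exists cs, h ystar = Fin cs /\ cs + Q ystar <= m.
  apply: NNPP => Hno.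
  set Qs := Q ystar.
  have [eps [he Ht]] : exists eps, 0 < eps /\ elt (Fin (m - Qs + eps)) (h ystar).
    case Hs: (h ystar) => [cs|].
      case: (Rle_lt_dec (cs + Qs) m) => H.
        by exfalso; apply: Hno; exists cs.
      by exists ((cs + Qs - m) / 2); split; [lra | rewrite /=; lra].
    by exists 1; split; [lra | done].
  have [del [hdel Hdel]] := hl ystar _ Ht.
  have [N1 HN1] := Hc1 (del ^ 2) (pow_lt _ _ hdel).
  have [N2 HN2] := Hc2 (eps / r) (Rdiv_lt_0_compat _ _ he hr).
  have [N3 [HN3 HN30]] := archimed_cor1 (eps / 2) (ltac:(lra)).
  pose n := Nat.add (Nat.add N1 N2) N3.
  have H1 := HN1 n (ltac:(rewrite /n; lia)).
  have H2 := HN2 n (ltac:(rewrite /n; lia)).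
  have [cn [Hcn Hcn']] := Hys n.
  have : elt (Fin (m - Qs + eps)) (h (ys n)).
    apply: Hdel; apply: normX_lt => //.
    rewrite /R_dist Rminus_0_r in H1; have := Rabs_def2 _ _ H1; lra.
  rewrite Hcn /= => Hlt.
  have hn3 : / INR (S n) <= / INR N3.
    by apply: Rinv_le_contravar; [apply: lt_0_INR; lia | apply: le_INR; rewrite /n; lia].
  rewrite /R_dist in H2; have [H2a H2b] := Rabs_def2 _ _ H2.
  have H2c : r / 2 * (nq (subX (ys n) a) - nq (subX ystar a)) > r / 2 * (- (eps / r)).
    by apply: Rmult_lt_compat_l; lra.
  have H2d : r / 2 * (- (eps / r)) = - (eps / 2) by field; lra.
  rewrite /Qs in Hlt; lra.
have [cs [Hcs Hcs']] := Hfin.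
exists ystar => y; rewrite Hcs.
case Hy: (h y) => [c|] //=.
have e1 : forall u : X d, normX u * (normX u * 1) = ipX u u by move=> u; rewrite -nX2; ring.
rewrite !e1; have := Hm y c Hy; lra.
Qed.

End Prox.

Lemma small_t (Aa Cc : R) : 0 <= Cc -> (forall t, 0 < t <= 1 -> Aa <= t * Cc) -> Aa <= 0.
Proof.
move=> hC H; apply: Rnot_lt_le => hA.
set k := Aa + Cc + 1.
have hk : 0 < k by rewrite /k; lra.
set t := Aa / k.
have ht : t * k = Aa by rewrite /t; field; lra.
have ht0 : 0 < t by apply: Rdiv_lt_0_compat.
have ht1 : t <= 1.
  apply: (Rmult_le_reg_r k) => //; rewrite ht /k; lra.
have := H t (conj ht0 ht1).
have : t * Cc < t * k by apply: Rmult_lt_compat_l => //; rewrite /k; lra.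
lra.
Qed.

Section Sub.
Variables (d : nat) (h : X d -> ereal) (r : R) (a : X d).
Hypotheses (hp : eproper h) (hc : econvex h) (hr : 0 < r).
Implicit Types (y p u : X d).

Lemma prox_fin p : is_prox h r a p -> exists cp, h p = Fin cp.
Proof.
move=> H; case: hp => p0; case Hp0: (h p0) => [c0|] // _.
have := H p0; rewrite Hp0; case: (h p) => [cp|] //= _; by exists cp.
Qed.

Lemma nq_conv t y p :
  ipX (subX (addX (scaleX t y) (scaleX (1 - t) p)) a) (subX (addX (scaleX t y) (scaleX (1 - t) p)) a) =
  1 * ipX (subX p a) (subX p a) + (2 * t) * ipX (subX p a) (subX y p) + t ^ 2 * ipX (subX y p) (subX y p).
Proof.
rewrite !ipXE sR_comb3; apply: sR_ext => i; rewrite /subX /addX /scaleX; ring.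
Qed.

Lemma prox_subgrad p : is_prox h r a p ->
  exists cp, h p = Fin cp /\
    forall y, ele (Fin (cp + ipX (subX y p) (scaleX r (subX a p)))) (h y).
Proof.
move=> H; have [cp Hcp] := prox_fin p H; exists cp; split => // y.
case Hy: (h y) => [c|] //=.
have e1 : ipX (subX y p) (scaleX r (subX a p)) = - (r * ipX (subX p a) (subX y p)).
  rewrite (_ : forall z, - (r * z) = (- r) * z); last by move=> z; ring.
  rewrite !ipXE sR_scale.
  apply: sR_ext => i; rewrite /subX /scaleX; ring.
rewrite e1.
set A := ipX (subX p a) (subX p a).
set B := ipX (subX p a) (subX y p).
set C := ipX (subX y p) (subX y p).
have hC : 0 <= C by apply: ipX_ge0.
have e2 : forall u : X d, normX u * (normX u * 1) = ipX u u by move=> u; rewrite -nX2; ring.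
suff : cp - c - r * B <= 0 by lra.
apply: (@small_t _ (r / 2 * C)); first by apply: Rmult_le_pos; lra.
move=> t [ht0 ht1].
have := hc y p c cp t Hy Hcp (conj (Rlt_le _ _ ht0) ht1).
case Ht: (h _) => [ct|] // Hct; rewrite /ele in Hct.
have := H (addX (scaleX t y) (scaleX (1 - t) p)).
rewrite Hcp Ht /= !e2 nq_conv -/A -/B -/C => Hpr.
have : t * (cp - c - r * B) <= t * (t * (r / 2 * C)) by nra.
move=> Hm; apply: (Rmult_le_reg_l t) => //; lra.
Qed.

End Sub.

Lemma iter_plus n k : iter n (Rplus k) 0 = INR n * k.
Proof. elim: n => [|n IH]; first by rewrite /=; ring. rewrite iterS IH S_INR; ring. Qed.

Lemma sR_const (I : finType) (P : {pred I}) k :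
  \big[Rplus/0]_(i in P) k = INR #|P| * k.
Proof. by rewrite big_const iter_plus. Qed.

Lemma sRP_add (I : finType) (P : pred I) (F G : I -> R) :
  \big[Rplus/0]_(i | P i) F i + \big[Rplus/0]_(i | P i) G i = \big[Rplus/0]_(i | P i) (F i + G i).
Proof. by rewrite big_split. Qed.

Lemma sRP_scale (I : finType) (P : pred I) k (F : I -> R) :
  k * \big[Rplus/0]_(i | P i) F i = \big[Rplus/0]_(i | P i) (k * F i).
Proof.
apply: (big_morph (fun x => k * x)); first by move=> x y; ring.
by ring.
Qed.

Lemma sR_card0 (I : finType) (F : I -> R) : #|I| = 0%nat -> \big[Rplus/0]_(i : I) F i = 0.
Proof.
move=> H; apply: big1 => i _; exfalso.
by have := card0_eq H i; rewrite inE.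
Qed.

Section Main.
Variables (d : nat) (V : finType) (L : nat) (A : 'I_L -> {set V}).
Local Notation Z := (Zsp d A).
Local Notation XV := (XV d V).

Definition SZ (F : forall l : 'I_L, Asub A l -> 'I_d -> R) : R :=
  \big[Rplus/0]_(l < L) \big[Rplus/0]_(s : Asub A l) \big[Rplus/0]_(i < d) F l s i.
Definition SXV (F : V -> 'I_d -> R) : R :=
  \big[Rplus/0]_(v : V) \big[Rplus/0]_(i < d) F v i.

Lemma ipZE (a b : Z) : ipZ a b = SZ (fun l s i => a l s i * b l s i).
Proof. by []. Qed.
Lemma ipXVE (a b : XV) : ipXV a b = SXV (fun v i => a v i * b v i).
Proof. by []. Qed.

Lemma SZ_comb k1 k2 F G : k1 * SZ F + k2 * SZ G = SZ (fun l s i => k1 * F l s i + k2 * G l s i).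
Proof.
rewrite /SZ !sR_scale sR_add; apply: sR_ext => l.
rewrite !sR_scale sR_add; apply: sR_ext => s.
by rewrite !sR_scale sR_add.
Qed.

Lemma SZ_ext F G : (forall l s i, F l s i = G l s i) -> SZ F = SZ G.
Proof. by move=> H; apply: sR_ext => l; apply: sR_ext => s; apply: sR_ext => i. Qed.

Lemma SZ_sq0 (F : forall l : 'I_L, Asub A l -> 'I_d -> R) :
  SZ (fun l s i => F l s i * F l s i) <= 0 -> forall l s i, F l s i = 0.
Proof.
move=> H l s i.
have g3 : forall l s, 0 <= \big[Rplus/0]_(i < d) (F l s i * F l s i).
  by move=> l' s'; apply: sR_ge0 => j; nra.
have g2 : forall l, 0 <= \big[Rplus/0]_(s : Asub A l) \big[Rplus/0]_(i < d) (F l s i * F l s i).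
  by move=> l'; apply: sR_ge0.
have H0 : SZ (fun l s i => F l s i * F l s i) = 0.
  by apply: Rle_antisym => //; apply: sR_ge0.
have := @sR_eq0 _ _ g2 H0 l => H1.
have := @sR_eq0 _ _ (g3 l) H1 s => H2.
have := @sR_eq0 _ (fun j => F l s j * F l s j) (fun j => ltac:(nra)) H2 i.
simpl; nra.
Qed.

Lemma SXV_comb k1 k2 F G : k1 * SXV F + k2 * SXV G = SXV (fun v i => k1 * F v i + k2 * G v i).
Proof.
rewrite /SXV !sR_scale sR_add; apply: sR_ext => v.
by rewrite !sR_scale sR_add.
Qed.

Lemma SXV_ext F G : (forall v i, F v i = G v i) -> SXV F = SXV G.
Proof. by move=> H; apply: sR_ext => v; apply: sR_ext => i. Qed.

Lemma SXV_sq0 (F : V -> 'I_d -> R) :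
  SXV (fun v i => F v i * F v i) = 0 -> forall v i, F v i = 0.
Proof.
move=> H0 v i.
have g3 : forall v, 0 <= \big[Rplus/0]_(i < d) (F v i * F v i).
  by move=> v'; apply: sR_ge0 => j; nra.
have := @sR_eq0 _ _ g3 H0 v => H2.
have := @sR_eq0 _ (fun j => F v j * F v j) (fun j => ltac:(nra)) H2 i.
simpl; nra.
Qed.

Lemma Zext (a b : Z) : (forall l s i, a l s i = b l s i) -> a = b.
Proof.
move=> H; apply: functional_extensionality_dep => l.
apply: functional_extensionality => s; apply: functional_extensionality => i; exact: H.
Qed.

Lemma XVext (a b : XV) : (forall v i, a v i = b v i) -> a = b.
Proof.
move=> H; apply: functional_extensionality => v; apply: functional_extensionality => i; exact: H.
Qed.

Lemma Zpt (a b : Z) l s i : a = b -> a l s i = b l s i.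
Proof. by move=> ->. Qed.

Lemma zat_val (z : Z) l (s : Asub A l) : zat z l (val s) = z l s.
Proof. by rewrite /zat valK. Qed.

Lemma zat_in (z : Z) l v (h : v \in A l) : zat z l v = z l (exist _ v h).
Proof. by rewrite /zat insubT. Qed.

Lemma zat_out (z : Z) l v : v \notin A l -> zat z l v = @zeroX d.
Proof. by move=> h; rewrite /zat insubF //; apply: negbTE. Qed.

Lemma sumX_i (I : finType) (P : pred I) (F : I -> X d) i :
  (\big[@addX d/@zeroX d]_(s | P s) F s) i = \big[Rplus/0]_(s | P s) F s i.
Proof.
by apply: (big_morph (fun x : X d => x i)).
Qed.

Lemma ipZ_Mop (u : XV) (nu : Z) :
  ipZ (Mop u) nu = SXV (fun v i => u v i * \big[Rplus/0]_(l < L) zat nu l v i).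
Proof.
rewrite ipZE /SZ /SXV.
have E1 : forall l, \big[Rplus/0]_(s : Asub A l) \big[Rplus/0]_(i < d) (@Mop _ _ _ A u l s i * nu l s i) =
   \big[Rplus/0]_(v : V) \big[Rplus/0]_(i < d) (u v i * zat nu l v i).
  move=> l.
  rewrite (eq_bigr (fun s : Asub A l => (fun v => \big[Rplus/0]_(i < d) (u v i * zat nu l v i)) (val s))); last first.
    by move=> s _; rewrite /= zat_val.
  rewrite -(big_sub (A l) (fun v => \big[Rplus/0]_(i < d) (u v i * zat nu l v i))) /=.
  rewrite big_mkcond /=; apply: eq_bigr => v _.
  case: ifP => // hv.
  rewrite zat_out ?hv //.
  by apply: esym; apply: big1 => i _; rewrite /zeroX; ring.
rewrite (eq_bigr _ (fun l _ => E1 l)) exchange_big /=.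
apply: eq_bigr => v _; rewrite exchange_big /=; apply: eq_bigr => i _.
by rewrite sR_scale.
Qed.


Lemma sR_constT (I : finType) (k : R) : \big[Rplus/0]_(i : I) k = INR #|I| * k.
Proof. by rewrite big_const_seq count_predT /index_enum -enumT -cardT iter_plus. Qed.

Lemma card_Asub l : #|{: Asub A l}| = #|A l|.
Proof. by rewrite card_sig; apply: eq_card => x; rewrite inE. Qed.

Lemma gind_const (x : Z) : (forall l, in_sp1 (x l)) -> gind x = Fin 0.
Proof.
move=> H; rewrite /gind (eq_bigr (fun _ => Fin 0)).
  by rewrite big_Fin sR0.
by move=> l _; case: excluded_middle_informative => // /(_ (H l)).
Qed.

Lemma gind_inv (x : Z) c : gind x = Fin c -> c = 0 /\ forall l, in_sp1 (x l).
Proof.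
move=> Hg.
have Hall : forall l, in_sp1 (x l).
  move=> l; apply: NNPP => Hn.
  have := @big_eplus_PInf _ (fun l => if excluded_middle_informative (in_sp1 (x l)) then Fin 0 else PInf) l.
  case: excluded_middle_informative => //= _ /(_ erefl).
  by rewrite -/(gind x) Hg.
split => //; move: Hg; rewrite gind_const //; by case.
Qed.

Lemma zbar_i (zeta : Z) l i :
  zbar zeta l i = / INR #|A l| * \big[Rplus/0]_(s : Asub A l) zeta l s i.
Proof. by rewrite /zbar /scaleX /sumX sumX_i. Qed.

Lemma ipZ_const_lam (zeta : Z) (x : Z) : (forall l, in_sp1 (x l)) ->
  ipZ x (fun l s => subX (zeta l s) (zbar zeta l)) = 0.
Proof.
move=> H; rewrite ipZE /SZ; apply: big1 => l _.
have [c Hc] := H l.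
rewrite (eq_bigr (fun s => \big[Rplus/0]_(i < d) (c i * subX (zeta l s) (zbar zeta l) i))); last first.
  by move=> s _; rewrite Hc.
rewrite exchange_big /=; apply: big1 => i _.
rewrite -sR_scale.
have -> : \big[Rplus/0]_(s : Asub A l) subX (zeta l s) (zbar zeta l) i =
   \big[Rplus/0]_(s : Asub A l) zeta l s i + \big[Rplus/0]_(s : Asub A l) (- zbar zeta l i).
  by rewrite sR_add; apply: sR_ext => s.
rewrite sR_constT card_Asub zbar_i.
case: (Nat.eq_dec #|A l| 0) => hn.
  rewrite hn sR_card0 ?card_Asub //=; ring.
have hn' : INR #|A l| <> 0 by apply: not_0_INR.
field_simplify; [ring | exact: hn'].
Qed.

Lemma subdiff_mono (W : Type) (ip : W -> W -> R) subW phi l1 z1 l2 z2 :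
  subdiff ip subW phi l1 z1 -> subdiff ip subW phi l2 z2 ->
  ip z1 (subW l2 l1) + ip z2 (subW l1 l2) <= 0.
Proof.
move=> [c1 [H1 K1]] [c2 [H2 K2]].
have := K1 l2; rewrite H2 /= => E1.
have := K2 l1; rewrite H1 /= => E2.
lra.
Qed.

Lemma Uop_lam (zeta : Z) rho : 0 < rho ->
  Uop (fun l s => subX (zeta l s) (zbar zeta l)) (fun l s => scaleX (/ rho) (zbar zeta l)).
Proof.
move=> hr.
set lam := fun l s => subX (zeta l s) (zbar zeta l).
set z := fun l s => scaleX (/ rho) (zbar zeta l).
have hz : forall l, in_sp1 (z l) by move=> l; exists (scaleX (/ rho) (zbar zeta l)).
have h0 : forall l, in_sp1 ((fun (l : 'I_L) (s : Asub A l) => @zeroX d) l) by move=> l; exists (@zeroX d).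
exists 0; split.
  rewrite /fconj; apply: esup_eq.
    exists (fun l s => @zeroX d), 0; split; first exact: gind_const.
    by rewrite ipZ_const_lam //; ring.
  move=> r [x [c [Hx ->]]]; have [-> Hc] := gind_inv x c Hx.
  by rewrite ipZ_const_lam //; lra.
move=> mu; rewrite /fconj.
have E : ipZ z (subZ mu lam) = 1 * ipZ z mu + (-1) * ipZ z lam.
  by rewrite !ipZE SZ_comb; apply: SZ_ext => l s i; rewrite /subZ /subX; ring.
rewrite E /lam ipZ_const_lam //.
apply: esup_ge; exists z, 0; split; first exact: gind_const.
ring.
Qed.

Lemma SZ_add F G : SZ F + SZ G = SZ (fun l s i => F l s i + G l s i).
Proof.
rewrite -(Rmult_1_l (SZ F)) -(Rmult_1_l (SZ G)) SZ_comb.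
by apply: SZ_ext => l s i; ring.
Qed.

Lemma SZ_scale k F : k * SZ F = SZ (fun l s i => k * F l s i).
Proof.
rewrite /SZ sR_scale; apply: sR_ext => l; rewrite sR_scale; apply: sR_ext => s.
by rewrite sR_scale.
Qed.

Lemma SXV_add F G : SXV F + SXV G = SXV (fun v i => F v i + G v i).
Proof.
rewrite -(Rmult_1_l (SXV F)) -(Rmult_1_l (SXV G)) SXV_comb.
by apply: SXV_ext => v i; ring.
Qed.

Lemma ipXV_subl (a b c : XV) : ipXV (subXV a b) c = ipXV a c - ipXV b c.
Proof.
have -> : ipXV a c - ipXV b c = 1 * ipXV a c + (-1) * ipXV b c by ring.
rewrite !ipXVE SXV_comb.
by apply: SXV_ext => v i; rewrite /subXV /subX; ring.
Qed.

Lemma ipXV_subr (a b c : XV) : ipXV a (subXV b c) = ipXV a b - ipXV a c.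
Proof.
have -> : ipXV a b - ipXV a c = 1 * ipXV a b + (-1) * ipXV a c by ring.
rewrite !ipXVE SXV_comb.
by apply: SXV_ext => v i; rewrite /subXV /subX; ring.
Qed.

End Main.
Arguments subdiff_mono {W ip subW phi l1 z1 l2 z2}.
Arguments Zpt {d V L A a b} l s i.
Arguments SZ_sq0 {d V L A} F.
Arguments zat_in {d V L A} z {l v} h.
Arguments zat_out {d V L A} z {l v} _.
Arguments Zext {d V L A} a b.
Arguments XVext {d V} a b.
Arguments SZ {d V L A} F.
Arguments SXV {d V} F.
Theorem mainTheorem4
  (d : nat) (V : finType) (fv : V -> X d -> ereal)
  (e : rel V) (L : nat) (A : 'I_L -> {set V})
  (Mstar : Zsp d A -> XV d V)
  (rho : R) (zeta : Zsp d A) :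
  (* standing assumptions *)
  (forall v, eproper (fv v) /\ elsc (fv v) /\ econvex (fv v)) ->
  (exists y0 : X d, fsum fv (fun _ => y0) <> PInf /\
     forall y : X d, ele (fsum fv (fun _ => y0)) (fsum fv (fun _ => y))) ->
  symmetric e -> irreflexive e ->
  (forall v : V, exists l, v \in A l) ->
  (forall u w : V,
     connect (fun a b => e a b && [exists l, (a \in A l) && (b \in A l)]) u w) ->
  (* M^* is the adjoint of M *)
  (forall (x : XV d V) (nu : Zsp d A), ipZ (Mop x) nu = ipXV x (Mstar nu)) ->
  0 < rho ->
  exists lam z : Zsp d A,
    (* (i) *)
    (Uop lam z /\ addZ lam (scaleZ rho z) = zeta /\
     forall lam' z', Uop lam' z' -> addZ lam' (scaleZ rho z') = zeta ->
                     lam' = lam /\ z' = z) /\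
    (* (ii) *)
    (forall lam', JrhoU rho zeta lam' <-> lam' = lam) /\
    (* (iii) *)
    (forall l s, lam l s = subX (zeta l s) (zbar zeta l) /\
                 z l s = scaleX (/ rho) (zbar zeta l)) /\
    (* (iv) *)
    (let zb := fun m => scaleX (/ rho) (zbar zeta m) in
     let arg := fun v : V =>
       scaleX (/ INR #|sigmaV A v|)
         (\big[@addX d/@zeroX d]_(m < L | m \in sigmaV A v)
             subX (zb m) (scaleX (/ rho) (zat lam m v))) in
     (exists x : XV d V, forall v, is_prox (fv v) (rho * INR #|sigmaV A v|) (arg v) (x v)) /\
     forall x : XV d V,
       (forall v, is_prox (fv v) (rho * INR #|sigmaV A v|) (arg v) (x v)) ->
       forall w, Sop fv Mstar rho zeta w <->
                 w = (fun l s => addX (lam l s) (scaleX rho (x (val s))))).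
Proof.
move=> Hf Hmin Hsym Hirr Hcov Hconn Hadj Hrho.
have Hr0 : rho <> 0 by lra.
set lam : Zsp d A := fun l s => subX (zeta l s) (zbar zeta l).
set z : Zsp d A := fun l s => scaleX (/ rho) (zbar zeta l).
have HU : Uop lam z := @Uop_lam _ _ _ _ zeta rho Hrho.
have Heq : addZ lam (scaleZ rho z) = zeta.
  apply: Zext => l s i; rewrite /addZ /scaleZ /lam /z /addX /subX /scaleX; field; lra.
have Huniq : forall lam' z', Uop lam' z' -> addZ lam' (scaleZ rho z') = zeta -> lam' = lam /\ z' = z.
  move=> lam' z' HU' Heq'.
  have Hm := subdiff_mono HU HU'.
  have P1 : forall l s i, lam' l s i = zeta l s i - rho * z' l s i.
    move=> l s i; have := Zpt l s i Heq'; rewrite /addZ /addX /scaleZ /scaleX => <-; ring.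
  have P0 : forall l s i, lam l s i = zeta l s i - rho * z l s i.
    move=> l s i; have := Zpt l s i Heq; rewrite /addZ /addX /scaleZ /scaleX => <-; ring.
  have E : ipZ z (subZ lam' lam) + ipZ z' (subZ lam lam') =
           rho * SZ (fun l s i => (z l s i - z' l s i) * (z l s i - z' l s i)).
    rewrite !ipZE SZ_add SZ_scale; apply: SZ_ext => l s i.
    rewrite /subZ /subX P1 P0; ring.
  have HS : SZ (fun l s i => (z l s i - z' l s i) * (z l s i - z' l s i)) <= 0 by nra.
  have Hz := SZ_sq0 (fun l s i => z l s i - z' l s i) HS.
  split; apply: Zext => l s i; have := Hz l s i; rewrite ?P1 ?P0 => H;
    have E' : z' l s i = z l s i by lra.
  - by rewrite E'.
  - exact: E'.
exists lam, z.
split.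
  by split; [exact: HU | split; [exact: Heq | exact: Huniq]].
split.
  move=> lam'; split.
    by move=> [b [Hb Hz]]; exact: (proj1 (Huniq lam' b Hb (esym Hz))).
  by move=> ->; exists z; split => //; exact: esym Heq.
split; first by move=> l s; split.
move=> zb arg.
have Hsig : forall v, (0 < #|sigmaV A v|)%N.
  move=> v; have [l hl] := Hcov v; apply/card_gt0P; exists l; by rewrite inE.
have Hn0 : forall v, INR #|sigmaV A v| <> 0.
  by move=> v; apply: not_0_INR; have := Hsig v; case: #|_|.
have Hrv : forall v, 0 < rho * INR #|sigmaV A v|.
  move=> v; apply: Rmult_lt_0_compat => //; apply: lt_0_INR; apply/ltP; exact: Hsig.
split.
  have Hex : forall v, exists p, is_prox (fv v) (rho * INR #|sigmaV A v|) (arg v) p.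
    by move=> v; have [h1 [h2 h3]] := Hf v; exact: prox_exists h1 h2 h3 (Hrv v).
  exists (fun v => proj1_sig (constructive_indefinite_description _ (Hex v))).
  by move=> v; case: constructive_indefinite_description.
move=> x Hx.
set nu0 : Zsp d A := fun l s => addX (subX (lam l s) (scaleX rho (z l s))) (scaleX rho (x (val s))).
set a0 : Zsp d A := oppZ (Mop x).
have HM : forall nu, Mstar nu = fun v i => \big[Rplus/0]_(l < L) zat nu l v i.
  move=> nu; set G : XV d V := fun v i => \big[Rplus/0]_(l < L) zat nu l v i.
  have H1 : forall u, ipXV u (Mstar nu) = ipXV u G by move=> u; rewrite -Hadj ipZ_Mop.
  have H2 := H1 (subXV (Mstar nu) G).
  have H3 : SXV (fun v i => subXV (Mstar nu) G v i * subXV (Mstar nu) G v i) = 0.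
    by rewrite -ipXVE ipXV_subr H2 Rminus_eq_0.
  apply: XVext => v i; have := @SXV_sq0 _ _ _ H3 v i; rewrite /subXV /subX; lra.
have K : forall v i, oppXV (Mstar nu0) v i = scaleX (rho * INR #|sigmaV A v|) (subX (arg v) (x v)) i.
  move=> v i; rewrite HM /oppXV /oppX /scaleX /subX.
  have E1 : \big[Rplus/0]_(l < L) zat nu0 l v i =
      \big[Rplus/0]_(l < L | l \in sigmaV A v) (zat lam l v i - zbar zeta l i + rho * x v i).
    rewrite [RHS]big_mkcond /=; apply: eq_bigr => l _; rewrite inE.
    case: (boolP (v \in A l)) => hv.
      rewrite (zat_in nu0 hv) (zat_in lam hv) /nu0 /z /addX /subX /scaleX /=; field; lra.
    by rewrite (zat_out nu0 hv).
  have E2 : arg v i = / INR #|sigmaV A v| * \big[Rplus/0]_(l < L | l \in sigmaV A v) (/ rho * zbar zeta l i - / rho * zat lam l v i).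
    by rewrite /arg /zb /scaleX sumX_i.
  rewrite E1 E2.
  set SA := \big[Rplus/0]_(l < L | l \in sigmaV A v) zat lam l v i.
  set SB := \big[Rplus/0]_(l < L | l \in sigmaV A v) zbar zeta l i.
  have E3 : \big[Rplus/0]_(l < L | l \in sigmaV A v) (zat lam l v i - zbar zeta l i + rho * x v i)
      = SA + (-1) * SB + INR #|sigmaV A v| * (rho * x v i).
    rewrite /SA /SB sRP_scale -sR_const !sRP_add; apply: eq_bigr => l _; ring.
  have E4 : \big[Rplus/0]_(l < L | l \in sigmaV A v) (/ rho * zbar zeta l i - / rho * zat lam l v i)
      = / rho * SB + (- / rho) * SA.
    rewrite /SA /SB !sRP_scale sRP_add; apply: eq_bigr => l _; ring.
  rewrite E3 E4; field; split => //; exact: Hn0.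
have Hfin : forall v, exists c, fv v (x v) = Fin c.
  by move=> v; have [h1 _] := Hf v; exact: (@prox_fin _ _ _ _ h1 _ (Hx v)).
pose cv v := match fv v (x v) with Fin c => c | PInf => 0 end.
have Hcv : forall v, fv v (x v) = Fin (cv v).
  by move=> v; rewrite /cv; have [c ->] := Hfin v.
set fx := \big[Rplus/0]_(v : V) cv v.
have Hfx : fsum fv x = Fin fx.
  by rewrite /fsum (eq_bigr (fun v => Fin (cv v))) ?big_Fin // => v _; exact: Hcv.
set y := oppXV (Mstar nu0).
have Hy : y = fun v => scaleX (rho * INR #|sigmaV A v|) (subX (arg v) (x v)).
  by apply: XVext => v i; exact: K.
have Hsub : forall x', ele (Fin (fx + ipXV (subXV x' x) y)) (fsum fv x').
  move=> x'.
  have -> : fx + ipXV (subXV x' x) y = \big[Rplus/0]_(v : V) (cv v + ipX (subX (x' v) (x v)) (scaleX (rho * INR #|sigmaV A v|) (subX (arg v) (x v)))).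
    by rewrite Hy /fx /ipXV sR_add; apply: sR_ext => v.
  apply: ele_big => v.
  have [h1 [h2 h3]] := Hf v.
  have [cp [Hcp Hs]] := @prox_subgrad _ _ _ _ h1 h3 (Hrv v) _ (Hx v).
  by move: (Hcv v); rewrite Hcp => [[<-]]; exact: Hs.
have HTsub : subdiff (@ipXV d V) (@subXV d V) (fconj (@ipXV d V) (fsum fv)) y x.
  exists (ipXV x y - fx); split.
    rewrite /fconj; apply: esup_eq.
      by exists x, fx; split.
    move=> r' [x' [c' [Hx' ->]]].
    by have := Hsub x'; rewrite Hx' /= ipXV_subl; lra.
  move=> mu; rewrite ipXV_subr.
  by apply: esup_ge; exists x, fx; split => //; ring.
have HT : Top fv Mstar nu0 a0 by exists x; split.
have Hnu0eq : addZ nu0 (scaleZ rho a0) = subZ lam (scaleZ rho z).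
  by apply: Zext => l s i; rewrite /addZ /nu0 /a0 /scaleZ /subZ /oppZ /Mop /addX /subX /scaleX /oppX; ring.
have HTu : forall nu a, Top fv Mstar nu a -> addZ nu (scaleZ rho a) = subZ lam (scaleZ rho z) -> nu = nu0.
  move=> nu a [x1 [Hx1 ->]] Hnu.
  have Hm := subdiff_mono Hx1 HTsub.
  have Pn : forall l s i, nu l s i = lam l s i - rho * z l s i + rho * x1 (val s) i.
    move=> l s i; have := Zpt l s i Hnu.
    rewrite /addZ /subZ /scaleZ /addX /subX /scaleX /oppZ /oppX /Mop => H; lra.
  have E : ipXV x1 (subXV y (oppXV (Mstar nu))) + ipXV x (subXV (oppXV (Mstar nu)) y)
       = 1 * ipXV (subXV x1 x) (Mstar nu) + (-1) * ipXV (subXV x1 x) (Mstar nu0).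
    rewrite !ipXVE SXV_add SXV_comb; apply: SXV_ext => v i.
    rewrite /y /subXV /oppXV /oppX /subX; ring.
  rewrite E -!Hadj in Hm.
  have E2 : 1 * ipZ (Mop (subXV x1 x)) nu + (-1) * ipZ (Mop (subXV x1 x)) nu0 =
     rho * @SZ d V L A (fun l s i => (x1 (val s) i - x (val s) i) * (x1 (val s) i - x (val s) i)).
    rewrite !ipZE SZ_comb SZ_scale; apply: SZ_ext => l s i.
    rewrite Pn /nu0 /Mop /subXV /addX /subX /scaleX; ring.
  have HS : @SZ d V L A (fun l s i => (x1 (val s) i - x (val s) i) * (x1 (val s) i - x (val s) i)) <= 0 by nra.
  have Hz := SZ_sq0 (fun l s i => x1 (val s) i - x (val s) i) HS.
  apply: Zext => l s i; rewrite Pn; have := Hz l s i => H.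
  have -> : x1 (val s) i = x (val s) i by lra.
  by rewrite /nu0 /addX /subX /scaleX.
move=> w; split.
  move=> [r0 [[mu [b [nu [a [HUb [HTa [Heq1 [Hw Hr]]]]]]]] Hzw]].
  have Hmb : addZ mu (scaleZ rho b) = zeta.
    rewrite Hzw Hw Hr; apply: Zext => l s i; rewrite /addZ /subZ /scaleZ /addX /subX /scaleX; ring.
  have [Emu Eb] := Huniq mu b HUb Hmb.
  rewrite Emu Eb in Heq1 Hw.
  have Hnu := HTu nu a HTa Heq1.
  rewrite Hw Hnu; apply: Zext => l s i; rewrite /addZ /scaleZ /nu0 /z /addX /subX /scaleX; field; lra.
move=> ->.
exists (subZ lam nu0); split.
  exists lam, z, nu0, a0; split => //; split => //; split; first exact: Hnu0eq.
  split => //.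
  by apply: Zext => l s i; rewrite /addZ /nu0 /scaleZ /z /addX /subX /scaleX; field; lra.
rewrite -{1}Heq; apply: Zext => l s i; rewrite /addZ /subZ /nu0 /scaleZ /addX /subX /scaleX; ring.
Qed.
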